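(* Let $d,\alpha>0$, $T>0$, $l_0>0$, let $\rho:\mathbb{R}\to(0,\infty)$ be a continuously differentiable $T$-periodic function with $\rho(0)=1$, and let $g$ satisfy the assumption (A1) described in the context. Consider the periodic impulsive eigenvalue problem $$\begin{cases}\phi_t=\frac{d}{\rho^2(t)}\phi_{yy}+\left(\frac{\alpha}{R_0}-\frac{\dot\rho(t)}{\rho(t)}\right)\phi, & y\in(0,l_0),\ t\in((nT)^+,(n+1)T],\ n=0,1,2,\dots,\\ \phi(t,0)=\phi(t,l_0)=0, & t>0,\\ \phi(0,y)=\phi(T,y), & y\in[0,l_0],\\ \phi((nT)^+,y)=g'(0)\phi(nT,y), & y\in(0,l_0),\ n=0,1,2,\dots\end{cases}$$ The ecological reproduction index $R_0$, i.e. the number for which this problem admits a positive eigenfunction $\phi(t,y)$, is given explicitly by $$R_0=\frac{\alpha}{\frac{d\lambda_1}{T}\int_0^T\frac{1}{\rho^2(t)}\,dt-\frac{1}{T}\ln g'(0)},$$ where $\lambda_1>0$ is the principal eigenvalue of $-\frac{d^2}{dy^2}$ on $(0,l_0)$ with Dirichlet boundary conditions (so $\lambda_1=(\pi/l_0)^2$). Moreover, $R_0$ is monotonically increasing with respect to $\rho$.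
   Context: Assumption (A1): $g$ is continuously differentiable on $[0,\infty)$, $g(0)=0$, $g'(0)>0$, and for $u>0$: $g(u)>0$, $g(u)/u$ is nonincreasing in $u$, and $0<g(u)/u<1$. The notation $(nT)^+$ denotes the right limit at time $nT$; the impulsive condition prescribes the jump of the solution at the times $nT$. *)

(* Defs.v *)
From Stdlib Require Import Reals Lra.
From Coquelicot Require Import Coquelicot.
Open Scope R_scope.

Definition cont_on2 (f : R -> R -> R) (P : R -> R -> Prop) : Prop :=
  forall t y, P t y -> forall eps : R, 0 < eps ->
    exists delta : R, 0 < delta /\
      forall t' y', P t' y' -> Rabs (t' - t) < delta -> Rabs (y' - y) < delta ->
        Rabs (f t' y' - f t y) < eps.

(* Assumption (A1) on g, with dg its derivative on [0,oo)
   (one-sided at 0, continuous on [0,oo)). *)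
Definition assumption_A1 (g dg : R -> R) : Prop :=
  (forall u, 0 < u -> is_derive g u (dg u)) /\
  filterlim (fun h => (g h - g 0) / h) (at_right 0) (locally (dg 0)) /\
  (forall u, 0 <= u ->
     filterlim dg (within (fun x => 0 <= x) (locally u)) (locally (dg u))) /\
  g 0 = 0 /\ 0 < dg 0 /\
  (forall u, 0 < u -> 0 < g u) /\
  (forall u v, 0 < u -> u <= v -> g v / v <= g u / u) /\
  (forall u, 0 < u -> 0 < g u / u /\ g u / u < 1).

Definition admissible_rho (T : R) (rho : R -> R) : Prop :=
  (forall t, 0 < rho t) /\
  (forall t, ex_derive rho t) /\
  (forall t, continuous (Derive rho) t) /\
  (forall t, rho (t + T) = rho t) /\
  rho 0 = 1.

Definition lambda1 (l0 : R) : R := (PI / l0) ^ 2.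

(* On each period, phi restricted to (nT,(n+1)T] x [0,l0] extends continuously
   (as psi) to [nT,(n+1)T] x [0,l0] with psi(nT,.) = (nT)^+ value = g0 phi(nT,.);
   phi_t and phi_yy exist in the interior, extend continuously up to y = 0, l0,
   and satisfy the PDE. *)
Definition pos_eigenfunction (d alpha T l0 : R) (rho : R -> R) (g0 R0 : R)
    (phi : R -> R -> R) : Prop :=
  (forall t y, 0 <= t -> 0 < y < l0 -> 0 < phi t y) /\
  (forall t, 0 < t -> phi t 0 = 0 /\ phi t l0 = 0) /\
  (forall y, 0 <= y <= l0 -> phi 0 y = phi T y) /\
  (forall n : nat, exists psi ut uy uyy : R -> R -> R,
     (forall t y, INR n * T < t <= (INR n + 1) * T -> 0 <= y <= l0 ->
        psi t y = phi t y) /\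
     (forall y, 0 < y < l0 -> psi (INR n * T) y = g0 * phi (INR n * T) y) /\
     cont_on2 psi (fun t y => INR n * T <= t <= (INR n + 1) * T /\ 0 <= y <= l0) /\
     cont_on2 ut (fun t y => INR n * T < t < (INR n + 1) * T /\ 0 <= y <= l0) /\
     cont_on2 uyy (fun t y => INR n * T < t < (INR n + 1) * T /\ 0 <= y <= l0) /\
     (forall t y, INR n * T < t < (INR n + 1) * T -> 0 < y < l0 ->
        is_derive (fun s => psi s y) t (ut t y) /\
        is_derive (fun z => psi t z) y (uy t y) /\
        is_derive (fun z => uy t z) y (uyy t y) /\
        ut t y = d / (rho t ^ 2) * uyy t y
                 + (alpha / R0 - Derive rho t / rho t) * psi t y)).

Definition R0_formula (d alpha T l0 : R) (rho : R -> R) (g0 : R) : R :=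
  alpha / (d * lambda1 l0 / T * RInt (fun t => 1 / (rho t ^ 2)) 0 T - ln g0 / T).

(* Main.v *)
Require Import Defs.
From Stdlib Require Import Reals.
From Coquelicot Require Import Coquelicot.
From Stdlib Require Import Lra ZArith.
Open Scope R_scope.

Definition clamp (a b x : R) := Rmax a (Rmin b x).

Lemma clamp_in a b x : a <= b -> a <= clamp a b x <= b.
Proof. intros; unfold clamp, Rmax, Rmin; repeat destruct Rle_dec; lra. Qed.

Lemma clamp_id a b x : a <= x <= b -> clamp a b x = x.
Proof. intros; unfold clamp, Rmax, Rmin; repeat destruct Rle_dec; lra. Qed.

Lemma clamp_lip a b x y : a <= b -> Rabs (clamp a b x - clamp a b y) <= Rabs (x - y).
Proof. intros; unfold clamp, Rmax, Rmin; repeat destruct Rle_dec;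
  unfold Rabs; repeat destruct Rcase_abs; lra. Qed.

Lemma clamp_cont a b x : a <= b -> continuity_pt (clamp a b) x.
Proof.
  intros Hab. apply continuity_pt_locally. intros eps.
  exists eps. intros y Hy. eapply Rle_lt_trans. apply clamp_lip; auto. exact Hy.
Qed.

Lemma loc_int a b x : a < x < b -> locally x (fun u => a < u < b).
Proof.
  intros H. assert (Hp : 0 < Rmin (x - a) (b - x)) by (apply Rmin_pos; lra).
  exists (mkposreal _ Hp). intros y Hy. change (Rabs (y - x) < Rmin (x - a) (b - x)) in Hy.
  apply Rabs_def2 in Hy. destruct Hy. pose proof (Rmin_l (x-a) (b-x)). pose proof (Rmin_r (x-a) (b-x)). lra.
Qed.

Lemma c2_fst h x y : continuity_pt h x -> continuity_2d_pt (fun u v => h u) x y.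
Proof. intros H. apply (continuity_1d_2d_pt_comp h (fun u v => u)); auto. apply continuity_2d_pt_id1. Qed.

Lemma c2_snd h x y : continuity_pt h y -> continuity_2d_pt (fun u v => h v) x y.
Proof. intros H. apply (continuity_1d_2d_pt_comp h (fun u v => v)); auto. apply continuity_2d_pt_id2. Qed.

Lemma c2_1d_snd f x y : continuity_2d_pt f x y -> continuity_pt (fun v => f x v) y.
Proof.
  intros H. apply continuity_pt_locally. intros eps. destruct (H eps) as [d Hd].
  exists d. intros v Hv. apply Hd. rewrite Rminus_diag, Rabs_R0. apply cond_pos. exact Hv.
Qed.

Lemma cont_on2_closed f a b c d : a <= b -> c <= d ->
  cont_on2 f (fun t y => a <= t <= b /\ c <= y <= d) ->
  forall x y, continuity_2d_pt (fun u v => f (clamp a b u) (clamp c d v)) x y.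
Proof.
  intros Hab Hcd H x y eps.
  destruct (H (clamp a b x) (clamp c d y)) with (eps := pos eps) as [de [Hde Hd]].
  split; apply clamp_in; auto. apply cond_pos.
  exists (mkposreal _ Hde). intros u v Hu Hv. simpl in *. apply Hd.
  split; apply clamp_in; auto.
  eapply Rle_lt_trans. apply clamp_lip; auto. auto.
  eapply Rle_lt_trans. apply clamp_lip; auto. auto.
Qed.

Lemma cont_on2_open f a b c d x : c <= d -> a < x < b ->
  cont_on2 f (fun t y => a < t < b /\ c <= y <= d) ->
  forall y, continuity_2d_pt (fun u v => f u (clamp c d v)) x y.
Proof.
  intros Hcd Hx H y eps.
  destruct (H x (clamp c d y)) with (eps := pos eps) as [de [Hde Hd]].
  split; auto; apply clamp_in; auto. apply cond_pos.
  assert (Hp : 0 < Rmin de (Rmin (x - a) (b - x))) by (repeat apply Rmin_pos; lra).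
  exists (mkposreal _ Hp). intros u v Hu Hv. simpl in *.
  pose proof (Rmin_l de (Rmin (x - a) (b - x))). pose proof (Rmin_r de (Rmin (x - a) (b - x))).
  pose proof (Rmin_l (x - a) (b - x)). pose proof (Rmin_r (x - a) (b - x)).
  apply Hd. split. apply Rabs_def2 in Hu. lra. apply clamp_in; auto.
  lra.
  eapply Rle_lt_trans. apply clamp_lip; auto. lra.
Qed.

Lemma cont2_cont_on2 f P : (forall x y, continuity_2d_pt f x y) -> cont_on2 f P.
Proof.
  intros H t y _ eps Heps. destruct (H t y (mkposreal _ Heps)) as [d Hd].
  exists d. split. apply cond_pos. intros; apply Hd; auto.
Qed.

Lemma cont_on2_weaken f (P Q : R -> R -> Prop) : (forall t y, P t y -> Q t y) -> cont_on2 f Q -> cont_on2 f P.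
Proof.
  intros HPQ H t y Hp eps He. destruct (H t y (HPQ _ _ Hp) eps He) as [d [Hd1 Hd2]].
  exists d; split; auto.
Qed.

Lemma cpt_cont f x : continuity_pt f x -> continuous f x.
Proof. intros; apply continuity_pt_filterlim; auto. Qed.
Lemma cont_cpt f x : continuous f x -> continuity_pt f x.
Proof. intros; apply continuity_pt_filterlim; auto. Qed.

Lemma ex_RInt_cpt f a b : (forall x, continuity_pt f x) -> ex_RInt f a b.
Proof. intros; apply (ex_RInt_continuous (V:=R_CompleteNormedModule)); intros; apply cpt_cont; auto. Qed.

Definition S (l0 y : R) := sin (PI / l0 * y).
Definition S' (l0 y : R) := PI / l0 * cos (PI / l0 * y).

Lemma dS l0 y : is_derive (S l0) y (S' l0 y).
Proof. unfold S, S'. auto_derive; auto. ring. Qed.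
Lemma dS' l0 y : is_derive (S' l0) y (- lambda1 l0 * S l0 y).
Proof. unfold S, S', lambda1. auto_derive; auto. ring. Qed.
Lemma S_cont l0 y : continuity_pt (S l0) y.
Proof. apply cont_cpt. apply (ex_derive_continuous (S l0)). eexists; apply dS. Qed.
Lemma S0 l0 : S l0 0 = 0.
Proof. unfold S. rewrite Rmult_0_r. apply sin_0. Qed.
Lemma Sl0 l0 : 0 < l0 -> S l0 l0 = 0.
Proof. intros. unfold S. replace (PI / l0 * l0) with PI by (field; lra). apply sin_PI. Qed.
Lemma S_pos l0 y : 0 < y < l0 -> 0 < S l0 y.
Proof.
  intros H. unfold S. pose proof PI_RGT_0. apply sin_gt_0.
  apply Rmult_lt_0_compat; [apply Rdiv_lt_0_compat|]; lra.
  replace PI with (PI / l0 * l0) at 2 by (field; lra). apply Rmult_lt_compat_l.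
  apply Rdiv_lt_0_compat; lra. lra.
Qed.

Lemma small_near h p : continuity_pt h p -> forall e, 0 < e ->
  exists d, 0 < d /\ forall y, Rabs (y - p) < d -> Rabs (h y - h p) < e.
Proof.
  intros H e He. apply continuity_pt_locally with (eps := mkposreal _ He) in H.
  destruct H as [d Hd]. exists d. split. apply cond_pos. intros; apply Hd; auto.
Qed.

Lemma bound_on h a b : a <= b -> (forall x, continuity_pt h x) ->
  exists M, 0 <= M /\ forall x, a <= x <= b -> Rabs (h x) <= M.
Proof.
  intros Hab H. destruct (continuity_ab_maj (fun x => Rabs (h x)) a b Hab) as [m [Hm _]].
  intros; apply continuity_pt_comp with (f2 := Rabs); auto. apply Rcontinuity_abs.
  exists (Rabs (h m)). split. apply Rabs_pos. auto.
Qed.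

Lemma eps_zero x : (forall e, 0 < e -> Rabs x < e) -> x = 0.
Proof.
  intros H. destruct (Req_dec x 0); auto. exfalso.
  specialize (H (Rabs x) (Rabs_pos_lt _ H0)). lra.
Qed.

Lemma is_derive_eq (f g : R -> R) x l l' : (forall t, f t = g t) -> l = l' -> is_derive f x l -> is_derive g x l'.
Proof. intros H1 H2 H3. subst. eapply is_derive_ext; eauto. Qed.

Lemma ibp l0 f f1 f2 : 0 < l0 ->
  (forall y, 0 < y < l0 -> is_derive f y (f1 y) /\ is_derive f1 y (f2 y)) ->
  (forall y, continuity_pt (fun z => f (clamp 0 l0 z)) y) ->
  (forall y, continuity_pt (fun z => f2 (clamp 0 l0 z)) y) ->
  f 0 = 0 -> f l0 = 0 ->
  is_RInt (fun y => f2 y * S l0 y + lambda1 l0 * f y * S l0 y) 0 l0 0.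
Proof.
  intros Hl Hd Cf Cf2 F0 Fl.
  set (H := fun y => f2 y * S l0 y + lambda1 l0 * f y * S l0 y).
  set (Hc := fun z => H (clamp 0 l0 z)).
  assert (CS : forall y, continuity_pt (fun z => S l0 (clamp 0 l0 z)) y).
  { intros; apply continuity_pt_comp with (f2 := S l0). apply clamp_cont; lra. apply S_cont. }
  assert (CH : forall y, continuity_pt Hc y).
  { intros y. unfold Hc, H. apply continuity_pt_plus. apply continuity_pt_mult; auto.
    apply continuity_pt_mult; auto. apply continuity_pt_mult; auto. apply continuity_pt_const. intros ? ?; auto. }
  assert (EH : forall a b, ex_RInt Hc a b) by (intros; apply ex_RInt_cpt; auto).
  destruct (bound_on Hc 0 l0) as [MH [MH0 HMH]]; try lra; auto.
  destruct (bound_on (fun z => f2 (clamp 0 l0 z)) 0 l0) as [M2 [M20 HM2]]; try lra; auto.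
  set (m := l0 / 2).
  set (B := Rabs (f1 m) + M2 * l0).
  assert (HB : forall y, 0 < y < l0 -> Rabs (f1 y) <= B).
  { intros y Hy. destruct (MVT_gen f1 m y f2) as [c [Hc1 Hc2]].
    - intros x Hx. apply Hd. pose proof (Rmin_l m y). pose proof (Rmax_r m y).
      pose proof (Rmin_r m y). pose proof (Rmax_l m y).
      unfold m in *. unfold Rmin, Rmax in *. destruct Rle_dec; lra.
    - intros x Hx. apply cont_cpt. apply (ex_derive_continuous f1). eexists. apply Hd.
      unfold m in *. unfold Rmin, Rmax in *. destruct Rle_dec; lra.
    - assert (Hcc : 0 <= c <= l0) by (unfold m in *; unfold Rmin, Rmax in *; destruct Rle_dec; lra).
      pose proof (HM2 c Hcc). rewrite clamp_id in H0 by lra.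
      unfold B. replace (f1 y) with (f1 m + (f1 y - f1 m)) by ring. rewrite Hc2.
      eapply Rle_trans. apply Rabs_triang. apply Rplus_le_compat_l. rewrite Rabs_mult.
      apply Rmult_le_compat; try apply Rabs_pos; auto.
      unfold m. apply Rabs_le. lra. }
  set (G := fun y => f1 y * S l0 y - f y * S' l0 y).
  assert (HG : forall a b, 0 < a -> a <= b -> b < l0 -> RInt Hc a b = G b - G a).
  { intros a b Ha Hab Hb. apply is_RInt_unique.
    replace (G b - G a) with (minus (G b) (G a)) by reflexivity.
    apply (is_RInt_derive (V:=R_CompleteNormedModule)).
    - intros x Hx. rewrite Rmin_left, Rmax_right in Hx by lra.
      unfold Hc, H. rewrite clamp_id by lra.
      destruct (Hd x) as [D1 D2]; [lra|].
      unfold G.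
      generalize (is_derive_mult f1 (S l0) x _ _ D2 (dS l0 x) ltac:(intros; apply Rmult_comm)).
      generalize (is_derive_mult f (S' l0) x _ _ D1 (dS' l0 x) ltac:(intros; apply Rmult_comm)).
      intros K1 K2. generalize (is_derive_minus _ _ x _ _ K2 K1). apply is_derive_eq.
      intros; reflexivity. unfold minus, plus, mult, opp, lambda1, S'; simpl. ring.
    - intros x Hx. apply cpt_cont; auto. }
  assert (Gsmall : forall p, 0 <= p <= l0 -> S l0 p = 0 -> f p = 0 -> forall e, 0 < e ->
     exists d, 0 < d /\ forall y, 0 < y < l0 -> Rabs (y - p) < d -> Rabs (G y) < e).
  { intros p Hp Sp fp e He.
    assert (He1 : 0 < e / (2 * (B + 1))).
    { apply Rdiv_lt_0_compat; auto. assert (0 <= B). { eapply Rle_trans; [apply Rabs_pos|apply (HB m)]. unfold m; lra. } lra. }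
    assert (HPl : 0 < PI / l0) by (apply Rdiv_lt_0_compat; [apply PI_RGT_0|lra]).
    assert (He2 : 0 < e / (2 * (PI / l0 + 1))) by (apply Rdiv_lt_0_compat; lra).
    destruct (small_near _ p (S_cont l0 p) _ He1) as [d1 [Hd1 Hd1']].
    destruct (small_near _ p (Cf p) _ He2) as [d2 [Hd2 Hd2']].
    exists (Rmin d1 d2). split. apply Rmin_pos; auto.
    intros y Hy Hyp. pose proof (Rmin_l d1 d2). pose proof (Rmin_r d1 d2).
    specialize (Hd1' y ltac:(lra)). specialize (Hd2' y ltac:(lra)).
    rewrite Sp, Rminus_0_r in Hd1'. rewrite (clamp_id 0 l0 p), fp, Rminus_0_r, clamp_id in Hd2' by lra.
    unfold G. eapply Rle_lt_trans. apply Rabs_triang. rewrite Rabs_Ropp, !Rabs_mult.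
    assert (Hc1 : Rabs (S' l0 y) <= PI / l0).
    { unfold S'. rewrite Rabs_mult, Rabs_pos_eq by lra. pose proof (COS_bound (PI / l0 * y)).
      assert (Rabs (cos (PI / l0 * y)) <= 1) by (apply Rabs_le; lra). nra. }
    pose proof (HB y Hy). pose proof (Rabs_pos (f1 y)). pose proof (Rabs_pos (S l0 y)). pose proof (Rabs_pos (f y)).
    assert (Rabs (f1 y) * Rabs (S l0 y) <= B * (e / (2 * (B + 1)))).
    { apply Rmult_le_compat; auto; lra. }
    assert (Rabs (f y) * Rabs (S' l0 y) <= (e / (2 * (PI / l0 + 1))) * (PI / l0)).
    { apply Rmult_le_compat; auto; try lra. apply Rabs_pos. }
    assert (B * (e / (2 * (B + 1))) < e / 2).
    { assert (0 <= B) by lra. unfold Rdiv. rewrite Rinv_mult. 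
      replace (B * (e * (/ 2 * / (B + 1)))) with (e * / 2 * (B * / (B + 1))) by ring.
      assert (B * / (B + 1) < 1). { apply Rmult_lt_reg_r with (B + 1). lra. rewrite Rmult_assoc, Rinv_l by lra. lra. }
      rewrite <- (Rmult_1_r (e * / 2)) at 2. apply Rmult_lt_compat_l; lra. }
    assert ((e / (2 * (PI / l0 + 1))) * (PI / l0) < e / 2).
    { set (q := PI / l0) in *. unfold Rdiv. rewrite Rinv_mult.
      assert (q * / (q + 1) < 1). { apply Rmult_lt_reg_r with (q + 1). lra. rewrite Rmult_assoc, Rinv_l by lra. lra. }
      replace (e * (/ 2 * / (q + 1)) * q) with (e * / 2 * (q * / (q + 1))) by ring.
      rewrite <- (Rmult_1_r (e * / 2)) at 2. apply Rmult_lt_compat_l; lra. }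
    lra. }
  assert (Hint : RInt Hc 0 l0 = 0).
  { apply eps_zero. intros e He.
    assert (He4 : 0 < e / 4) by lra.
    destruct (Gsmall 0 ltac:(lra) (S0 l0) F0 _ He4) as [d1 [Hd1 Hd1']].
    destruct (Gsmall l0 ltac:(lra) (Sl0 l0 Hl) Fl _ He4) as [d2 [Hd2 Hd2']].
    assert (Hq : 0 < e / (8 * (MH + 1))) by (apply Rdiv_lt_0_compat; lra).
    set (a := Rmin (d1 / 2) (Rmin (l0 / 4) (e / (8 * (MH + 1))))).
    set (b := l0 - Rmin (d2 / 2) (Rmin (l0 / 4) (e / (8 * (MH + 1))))).
    assert (Ha : 0 < a /\ a < d1 /\ a <= l0 / 4 /\ a <= e / (8 * (MH + 1))).
    { unfold a. pose proof (Rmin_l (d1/2) (Rmin (l0 / 4) (e / (8 * (MH + 1))))).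
      pose proof (Rmin_r (d1/2) (Rmin (l0 / 4) (e / (8 * (MH + 1))))).
      pose proof (Rmin_l (l0 / 4) (e / (8 * (MH + 1)))). pose proof (Rmin_r (l0 / 4) (e / (8 * (MH + 1)))).
      repeat split; try lra. repeat apply Rmin_pos; lra. }
    assert (Hb : 0 < l0 - b /\ l0 - b < d2 /\ l0 - b <= l0 / 4 /\ l0 - b <= e / (8 * (MH + 1))).
    { unfold b. pose proof (Rmin_l (d2/2) (Rmin (l0 / 4) (e / (8 * (MH + 1))))).
      pose proof (Rmin_r (d2/2) (Rmin (l0 / 4) (e / (8 * (MH + 1))))).
      pose proof (Rmin_l (l0 / 4) (e / (8 * (MH + 1)))). pose proof (Rmin_r (l0 / 4) (e / (8 * (MH + 1)))).
      assert (0 < Rmin (d2 / 2) (Rmin (l0 / 4) (e / (8 * (MH + 1))))) by (repeat apply Rmin_pos; lra).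
      repeat split; lra. }
    assert (HMq : forall z, 0 <= z <= e / (8 * (MH + 1)) -> z * MH <= e / 8).
    { intros z Hz. apply Rle_trans with (e / (8 * (MH + 1)) * MH). apply Rmult_le_compat_r; lra.
      unfold Rdiv. rewrite Rinv_mult.
      assert (MH * / (MH + 1) <= 1). { apply Rmult_le_reg_r with (MH + 1). lra. rewrite Rmult_assoc, Rinv_l by lra. lra. }
      assert (0 < / 8) by lra. nra. }
    rewrite <- (RInt_Chasles Hc 0 a l0) by auto.
    rewrite <- (RInt_Chasles Hc a b l0) by auto.
    rewrite (HG a b) by lra.
    assert (A1 : Rabs (RInt Hc 0 a) <= (a - 0) * MH).
    { apply abs_RInt_le_const; auto. lra. intros; apply HMH; lra. }
    assert (A2 : Rabs (RInt Hc b l0) <= (l0 - b) * MH).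
    { apply abs_RInt_le_const; auto. lra. intros; apply HMH; lra. }
    assert (A3 : Rabs (G a) < e / 4). { apply Hd1'. lra. rewrite Rminus_0_r, Rabs_pos_eq; lra. }
    assert (A4 : Rabs (G b) < e / 4). { apply Hd2'. lra. rewrite Rabs_minus_sym, Rabs_pos_eq; lra. }
    pose proof (HMq a ltac:(lra)). pose proof (HMq (l0 - b) ltac:(lra)).
    unfold plus; simpl.
    eapply Rle_lt_trans. apply Rabs_triang. eapply Rle_lt_trans. apply Rplus_le_compat_l. apply Rabs_triang.
    eapply Rle_lt_trans. apply Rplus_le_compat_r. apply A1.
    eapply Rle_lt_trans. apply Rplus_le_compat_l. apply Rplus_le_compat_r. apply Rabs_triang.
    rewrite Rabs_Ropp. lra. }
  apply is_RInt_ext with Hc.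
  { intros x Hx. rewrite Rmin_left, Rmax_right in Hx by lra. unfold Hc. rewrite clamp_id by lra. reflexivity. }
  pose proof (RInt_correct (V:=R_CompleteNormedModule) _ _ _ (EH 0 l0)) as K. rewrite Hint in K. exact K.
Qed.

Lemma pos_int l0 f : 0 < l0 ->
  (forall y, continuity_pt (fun z => f (clamp 0 l0 z)) y) ->
  (forall y, 0 < y < l0 -> 0 < f y) ->
  0 < RInt (fun y => f y * S l0 y) 0 l0.
Proof.
  intros Hl Cf Hp.
  rewrite (RInt_ext _ (fun y => f (clamp 0 l0 y) * S l0 (clamp 0 l0 y))).
  apply RInt_gt_0; auto.
  - intros x Hx. rewrite clamp_id by lra. apply Rmult_lt_0_compat; auto. apply S_pos; auto.
  - intros x Hx. apply cpt_cont. apply continuity_pt_mult; auto.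
    apply continuity_pt_comp with (f2 := S l0). apply clamp_cont; lra. apply S_cont.
  - intros x Hx. rewrite Rmin_left, Rmax_right in Hx by lra. rewrite clamp_id by lra. reflexivity.
Qed.

Lemma ex_RInt_clamp l0 f : 0 < l0 ->
  (forall y, continuity_pt (fun z => f (clamp 0 l0 z)) y) ->
  ex_RInt (fun y => f y * S l0 y) 0 l0.
Proof.
  intros Hl Cf. apply ex_RInt_ext with (fun y => f (clamp 0 l0 y) * S l0 y).
  intros x Hx. rewrite Rmin_left, Rmax_right in Hx by lra. rewrite clamp_id by lra. reflexivity.
  apply ex_RInt_cpt. intros; apply continuity_pt_mult; auto. apply S_cont.
Qed.

Lemma is_derive_c (c x : R) : is_derive (fun _ => c) x 0.
Proof. apply (is_derive_const (K:=R_AbsRing) (V:=R_NormedModule)). Qed.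

Lemma W_const T l0 (Z Zt : R -> R -> R) : 0 < T -> 0 < l0 ->
  (forall x y, continuity_2d_pt (fun u v => Z (clamp 0 T u) (clamp 0 l0 v)) x y) ->
  (forall x y, 0 < x < T -> continuity_2d_pt (fun u v => Zt u (clamp 0 l0 v)) x y) ->
  (forall t y, 0 < t < T -> 0 < y < l0 -> is_derive (fun s => Z s y) t (Zt t y)) ->
  (forall t, 0 < t < T -> RInt (fun y => Zt t y * S l0 y) 0 l0 = 0) ->
  RInt (fun y => Z 0 y * S l0 y) 0 l0 = RInt (fun y => Z T y * S l0 y) 0 l0.
Proof.
  intros HT Hl CZ CZt DZ IZ.
  set (F := fun u v => Z (clamp 0 T u) (clamp 0 l0 v) * S l0 (clamp 0 l0 v)).
  assert (CS : forall y, continuity_pt (fun z => S l0 (clamp 0 l0 z)) y).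
  { intros; apply continuity_pt_comp with (f2 := S l0). apply clamp_cont; lra. apply S_cont. }
  assert (CF : forall x y, continuity_2d_pt F x y).
  { intros x y. apply continuity_2d_pt_mult; auto. apply c2_snd; auto. }
  assert (EF : forall u, ex_RInt (F u) 0 l0).
  { intros u. apply ex_RInt_cpt. intros y. apply c2_1d_snd. auto. }
  set (W := fun u => RInt (F u) 0 l0).
  assert (CW : forall x, continuity_pt W x).
  { intros x. apply continuity_pt_locally. intros eps.
    assert (He : 0 < eps / (2 * l0)) by (apply Rdiv_lt_0_compat; [apply cond_pos|lra]).
    destruct (uniform_continuity_2d F (x - 1) (x + 1) 0 l0 (fun a b _ _ => CF a b) (mkposreal _ He)) as [d Hd].
    assert (Hp : 0 < Rmin d 1) by (apply Rmin_pos; [apply cond_pos|lra]).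
    exists (mkposreal _ Hp). intros u Hu. change (Rabs (u - x) < Rmin d 1) in Hu.
    pose proof (Rmin_l d 1). pose proof (Rmin_r d 1).
    unfold W. replace (RInt (F u) 0 l0 - RInt (F x) 0 l0) with (minus (RInt (F u) 0 l0) (RInt (F x) 0 l0)) by reflexivity.
    rewrite <- RInt_minus by auto.
    eapply Rle_lt_trans. apply abs_RInt_le_const with (M := eps / (2 * l0)). lra.
    apply ex_RInt_minus; auto.
    intros t Ht. unfold minus, plus, opp; simpl. apply Rlt_le. apply (Hd x t u t); simpl; try lra.
    apply Rabs_def2 in Hu. lra. rewrite Rminus_diag, Rabs_R0. apply cond_pos.
    replace ((l0 - 0) * (eps / (2 * l0))) with (eps / 2) by (field; lra).
    pose proof (cond_pos eps). lra. }
  assert (DF : forall x v, 0 < x < T -> is_derive (fun u => F u v) x (Zt x (clamp 0 l0 v) * S l0 (clamp 0 l0 v))).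
  { intros x v Hx. pose proof (clamp_in 0 l0 v ltac:(lra)) as Hc.
    set (c := clamp 0 l0 v) in *. unfold F. fold c.
    destruct (Req_dec c 0) as [E|E].
    { rewrite E, S0. apply (is_derive_eq (fun _ => 0) _ _ 0). all: try (intros; rewrite Rmult_0_r; reflexivity). apply is_derive_c. }
    destruct (Req_dec c l0) as [E'|E'].
    { rewrite E', Sl0 by lra. apply (is_derive_eq (fun _ => 0) _ _ 0). all: try (intros; rewrite Rmult_0_r; reflexivity). apply is_derive_c. }
    apply is_derive_ext_loc with (fun u => Z u c * S l0 c).
    { apply filter_imp with (fun u => 0 < u < T). intros u Hu. rewrite clamp_id by lra. reflexivity.
      apply loc_int; auto. }
    apply (is_derive_eq (fun u => S l0 c * Z u c) _ _ (S l0 c * Zt x c)). all: try (intros; apply Rmult_comm).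
    apply is_derive_scal. apply DZ; auto. lra. }
  assert (DW : forall x, 0 < x < T -> is_derive W x 0).
  { intros x Hx. unfold W.
    assert (K := is_derive_RInt_param F 0 l0 x).
    rewrite (RInt_ext _ (fun y => Zt x y * S l0 y)) in K.
    rewrite IZ in K by auto. apply K.
    - apply filter_imp with (fun u => 0 < u < T). intros u Hu t Ht. eexists. apply DF; auto.
      apply loc_int; auto.
    - intros t Ht. apply continuity_2d_pt_ext_loc with (fun u v => Zt u (clamp 0 l0 v) * S l0 (clamp 0 l0 v)).
      + assert (Hp : 0 < Rmin x (T - x)) by (apply Rmin_pos; lra).
        exists (mkposreal _ Hp). intros u v Hu Hv. simpl in Hu.
        pose proof (Rmin_l x (T - x)). pose proof (Rmin_r x (T - x)). apply Rabs_def2 in Hu.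
        symmetry. apply is_derive_unique. apply DF. lra.
      + apply continuity_2d_pt_mult; auto. apply c2_snd; auto.
    - apply filter_forall. auto.
    - intros y Hy. rewrite Rmin_left, Rmax_right in Hy by lra.
      transitivity (Zt x (clamp 0 l0 y) * S l0 (clamp 0 l0 y)). apply is_derive_unique. apply (DF x y Hx). rewrite clamp_id by lra. reflexivity. }
  destruct (MVT_gen W 0 T (fun _ => 0)) as [c [_ Hc]].
  - intros x Hx. rewrite Rmin_left, Rmax_right in Hx by lra. apply DW; auto.
  - intros; auto.
  - assert (W 0 = W T) by lra. unfold W, F in H.
    rewrite (RInt_ext (fun y => Z 0 y * S l0 y) (fun v => Z (clamp 0 T 0) (clamp 0 l0 v) * S l0 (clamp 0 l0 v))).
    rewrite (RInt_ext (fun y => Z T y * S l0 y) (fun v => Z (clamp 0 T T) (clamp 0 l0 v) * S l0 (clamp 0 l0 v))).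
    exact H.
    all: intros y Hy; rewrite Rmin_left, Rmax_right in Hy by lra; rewrite !clamp_id by lra; reflexivity.
Qed.

Lemma d_exp_comp (E : R -> R) t e : is_derive E t e -> is_derive (fun s => exp (E s)) t (exp (E t) * e).
Proof.
  intros H. assert (K : is_derive exp (E t) (exp (E t))) by (auto_derive; auto; ring).
  generalize (is_derive_comp exp E t _ _ K H). apply is_derive_eq. intros; reflexivity.
  unfold scal; simpl; unfold mult; simpl. ring.
Qed.

Lemma rho_cont T rho t : admissible_rho T rho -> continuity_pt rho t.
Proof. intros [_ [Hd _]]. apply cont_cpt. apply (ex_derive_continuous rho). apply Hd. Qed.

Lemma inv2_cont T rho t : admissible_rho T rho -> continuity_pt (fun s => 1 / (rho s ^ 2)) t.
Proof.
  intros Ha. pose proof Ha as [Hp [Hd _]]. apply cont_cpt. apply (ex_derive_continuous (fun s => 1 / (rho s ^ 2))).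
  auto_derive. repeat split; auto. pose proof (Hp t). nra.
Qed.

Lemma dRInt_inv2 T rho t : admissible_rho T rho ->
  is_derive (fun s => RInt (fun u => 1 / (rho u ^ 2)) 0 s) t (1 / (rho t ^ 2)).
Proof.
  intros Ha. apply (is_derive_RInt (V:=R_CompleteNormedModule) (fun u => 1 / (rho u ^ 2)) (fun s => RInt (fun u => 1 / (rho u ^ 2)) 0 s) 0 t).
  apply filter_forall. intros b. apply (RInt_correct (V:=R_CompleteNormedModule)).
  apply ex_RInt_cpt. intros; eapply inv2_cont; eauto.
  apply cpt_cont. eapply inv2_cont; eauto.
Qed.

Lemma Irho_pos T rho : 0 < T -> admissible_rho T rho -> 0 < RInt (fun u => 1 / (rho u ^ 2)) 0 T.
Proof.
  intros HT Ha. pose proof Ha as [Hp _]. apply RInt_gt_0; auto.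
  intros x _. pose proof (Hp x). apply Rdiv_lt_0_compat; [lra|]. apply pow_lt; auto.
  intros x _. apply cpt_cont. eapply inv2_cont; eauto.
Qed.

Lemma lambda1_pos l0 : 0 < l0 -> 0 < lambda1 l0.
Proof. intros. unfold lambda1. apply pow_lt. apply Rdiv_lt_0_compat; auto. apply PI_RGT_0. Qed.

Lemma g0_le1 g dg : assumption_A1 g dg -> 0 < dg 0 <= 1.
Proof.
  intros [_ [Hl [_ [G0 [Hd [_ [_ Hr]]]]]]]. split; auto.
  destruct (Rle_dec (dg 0) 1) as [|Hn]; auto. exfalso.
  assert (He : 0 < dg 0 - 1) by lra.
  specialize (Hl (fun z => Rabs (z - dg 0) < dg 0 - 1)).
  destruct Hl as [e He'].
  { exists (mkposreal _ He). intros y Hy. exact Hy. }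
  set (h := e / 2). assert (0 < h) by (unfold h; pose proof (cond_pos e); lra).
  specialize (He' h). simpl in He'. 
  assert (Hb : ball 0 e h). { change (Rabs (h - 0) < e). rewrite Rminus_0_r, Rabs_pos_eq by lra. unfold h. pose proof (cond_pos e). lra. }
  specialize (He' Hb H). rewrite G0, Rminus_0_r in He'. destruct (Hr h H) as [_ H2].
  apply Rabs_def2 in He'. lra.
Qed.

Definition Ar d l0 rho t := d * lambda1 l0 * RInt (fun u => 1 / (rho u ^ 2)) 0 t.

Lemma dAr d l0 T rho t : admissible_rho T rho -> is_derive (Ar d l0 rho) t (d * lambda1 l0 * (1 / (rho t ^ 2))).
Proof. intros Ha. unfold Ar. apply is_derive_scal. eapply dRInt_inv2; eauto. Qed.

Lemma RInt_scal_R (f : R -> R) a b c : ex_RInt f a b -> RInt (fun y => c * f y) a b = c * RInt f a b.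
Proof. intros H. apply (RInt_scal (V:=R_CompleteNormedModule) f a b c H). Qed.

Lemma only_if d alpha T l0 rho g0 R0 phi : 0 < d -> 0 < alpha -> 0 < T -> 0 < l0 ->
  admissible_rho T rho -> 0 < g0 <= 1 ->
  pos_eigenfunction d alpha T l0 rho g0 R0 phi -> R0 = R0_formula d alpha T l0 rho g0.
Proof.
  intros Hd Ha HT Hl Hrho Hg [Ppos [Pbd [Pper Pn]]].
  pose proof Hrho as [Rpos [Rder [Rdc [Rper R00]]]].
  destruct (Pn 0%nat) as [psi [ut [uy [uyy [Hpsi [Hjump [Cpsi [Cut [Cuyy Hder]]]]]]]]].
  simpl INR in *. rewrite Rmult_0_l, Rplus_0_l, Rmult_1_l in *.
  set (E := fun t => Ar d l0 rho t - alpha / R0 * t).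
  set (M := fun t => rho t * exp (E t)).
  set (Md := fun t => Derive rho t * exp (E t) + rho t * exp (E t) * (d * lambda1 l0 * (1 / (rho t ^ 2)) - alpha / R0)).
  assert (dE : forall t, is_derive E t (d * lambda1 l0 * (1 / (rho t ^ 2)) - alpha / R0)).
  { intros t. unfold E.
    assert (K2 : is_derive (fun s => alpha / R0 * s) t (alpha / R0)).
    { apply (is_derive_eq (fun s => alpha / R0 * s) _ _ (alpha / R0 * 1)). intros; reflexivity. apply Rmult_1_r.
      apply is_derive_scal. apply (is_derive_id (K:=R_AbsRing)). }
    generalize (is_derive_minus _ _ t _ _ (dAr d l0 T rho t Hrho) K2). apply is_derive_eq.
    intros; reflexivity. reflexivity. }
  assert (dM : forall t, is_derive M t (Md t)).
  { intros t. unfold M, Md. generalize (is_derive_mult rho (fun s => exp (E s)) t _ _ (Derive_correct _ _ (Rder t)) (d_exp_comp E t _ (dE t)) ltac:(intros; apply Rmult_comm)).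
    apply is_derive_eq. intros; reflexivity. unfold plus, mult; simpl. ring. }
  assert (CM : forall t, continuity_pt M t).
  { intros t. apply cont_cpt. apply (ex_derive_continuous M). eexists; apply dM. }
  assert (CE : forall t, continuity_pt (fun s => exp (E s)) t).
  { intros t. apply cont_cpt. apply (ex_derive_continuous (fun s => exp (E s))). eexists; apply d_exp_comp, dE. }
  assert (CMd : forall t, continuity_pt Md t).
  { intros t. unfold Md. apply continuity_pt_plus. apply continuity_pt_mult; auto. apply cont_cpt; auto.
    apply continuity_pt_mult. apply continuity_pt_mult; auto. eapply rho_cont; eauto.
    apply continuity_pt_minus. apply continuity_pt_mult. apply continuity_pt_const. intros ? ?; auto.
    eapply inv2_cont; eauto. apply continuity_pt_const. intros ? ?; auto. }
  assert (CMc : forall t, continuity_pt (fun s => M (clamp 0 T s)) t).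
  { intros t. apply continuity_pt_comp with (f2 := M); auto. apply clamp_cont; lra. }
  assert (Cpsi2 := cont_on2_closed psi 0 T 0 l0 ltac:(lra) ltac:(lra) Cpsi).
  assert (Cpsi3 : forall x y, 0 < x < T -> continuity_2d_pt (fun u v => psi u (clamp 0 l0 v)) x y).
  { intros x y Hx. apply (cont_on2_open psi 0 T 0 l0 x); try lra. eapply cont_on2_weaken; [|exact Cpsi].
    intros t z [? ?]; split; lra. }
  assert (Cut2 : forall x y, 0 < x < T -> continuity_2d_pt (fun u v => ut u (clamp 0 l0 v)) x y).
  { intros x y Hx. apply (cont_on2_open ut 0 T 0 l0 x); try lra; auto. }
  assert (Cuyy2 : forall x y, 0 < x < T -> continuity_2d_pt (fun u v => uyy u (clamp 0 l0 v)) x y).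
  { intros x y Hx. apply (cont_on2_open uyy 0 T 0 l0 x); try lra; auto. }
  assert (Cpsit : forall t, 0 <= t <= T -> forall y, continuity_pt (fun z => psi t (clamp 0 l0 z)) y).
  { intros t Ht y. generalize (c2_1d_snd _ t y (Cpsi2 t y)). rewrite (clamp_id 0 T t) by lra. auto. }
  assert (W := W_const T l0 (fun t y => M t * psi t y) (fun t y => Md t * psi t y + M t * ut t y) HT Hl).
  rewrite (RInt_ext (fun y => M 0 * psi 0 y * S l0 y) (fun y => (g0 * M 0) * (psi T y * S l0 y))) in W.
  rewrite (RInt_ext (fun y => M T * psi T y * S l0 y) (fun y => M T * (psi T y * S l0 y))) in W.
  assert (EI : ex_RInt (fun y => psi T y * S l0 y) 0 l0).
  { apply ex_RInt_clamp; auto. apply Cpsit; lra. }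
  rewrite !RInt_scal_R in W by auto.
  assert (IP : 0 < RInt (fun y => psi T y * S l0 y) 0 l0).
  { apply pos_int; auto. apply Cpsit; lra. intros y Hy. rewrite Hpsi by lra. apply Ppos; lra. }
  assert (M0 : M 0 = 1).
  { unfold M, E, Ar. rewrite RInt_point. rewrite R00. change (@zero R_CompleteNormedModule) with 0.
    replace (d * lambda1 l0 * 0 - alpha / R0 * 0) with 0 by ring. rewrite exp_0. ring. }
  assert (MT : M T = g0).
  { rewrite M0, Rmult_1_r in W.
    apply Rmult_eq_reg_r with (RInt (fun y => psi T y * S l0 y) 0 l0). 2: lra.
    symmetry. apply W.
    - intros x y. apply (continuity_2d_pt_mult (fun u v => M (clamp 0 T u)) (fun u v => psi (clamp 0 T u) (clamp 0 l0 v))).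
      apply c2_fst; auto. auto.
    - intros x y Hx. apply continuity_2d_pt_plus.
      apply (continuity_2d_pt_mult (fun u v => Md u) (fun u v => psi u (clamp 0 l0 v))). apply c2_fst; auto. auto.
      apply (continuity_2d_pt_mult (fun u v => M u) (fun u v => ut u (clamp 0 l0 v))). apply c2_fst; auto. auto.
    - intros t y Ht Hy. generalize (is_derive_mult M (fun s => psi s y) t _ _ (dM t) (proj1 (Hder t y Ht Hy)) ltac:(intros; apply Rmult_comm)).
      apply is_derive_eq. intros; reflexivity. unfold plus, mult; simpl. ring.
    - intros t Ht.
      assert (Kt : 0 <= t <= T) by lra.
      assert (IB := ibp l0 (psi t) (uy t) (uyy t) Hl).
      assert (Rt : 0 < rho t) by auto.
      specialize (IB ltac:(intros y Hy; destruct (Hder t y Ht Hy) as [_ [K1 [K2 _]]]; split; auto)).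
      specialize (IB (Cpsit t Kt)).
      specialize (IB (fun y => c2_1d_snd _ t y (Cuyy2 t y Ht))).
      assert (P0 : psi t 0 = 0). { rewrite Hpsi by lra. apply Pbd; lra. }
      assert (PL : psi t l0 = 0). { rewrite Hpsi by lra. apply Pbd; lra. }
      specialize (IB P0 PL).
      apply (is_RInt_scal _ _ _ (M t * d / rho t ^ 2)) in IB.
      transitivity (scal (M t * d / rho t ^ 2) (0:R)).
      2: { unfold scal; simpl; unfold mult; simpl; ring. }
      apply is_RInt_unique.
      apply is_RInt_ext with (2 := IB). intros y Hy. rewrite Rmin_left, Rmax_right in Hy by lra.
      destruct (Hder t y Ht Hy) as [_ [_ [_ PDE]]]. rewrite PDE.
      unfold scal; simpl; unfold mult; simpl. unfold M, Md. set (k := alpha / R0). field. apply Rgt_not_eq; lra. }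
  - assert (RT : rho T = 1). { rewrite <- R00. rewrite <- (Rplus_0_l T) at 1. apply Rper. }
    unfold M in MT. rewrite RT, Rmult_1_l in MT.
    assert (ET : E T = ln g0). { rewrite <- MT, ln_exp. reflexivity. }
    unfold E, Ar in ET.
    assert (IPr := Irho_pos T rho HT Hrho).
    assert (LP := lambda1_pos l0 Hl).
    assert (Lg : ln g0 <= 0). { rewrite <- ln_1. apply ln_le; lra. }
    set (I := RInt (fun u => 1 / (rho u ^ 2)) 0 T) in *.
    assert (dlI : 0 < d * lambda1 l0 * I) by (apply Rmult_lt_0_compat; [apply Rmult_lt_0_compat|]; lra).
    destruct (Req_dec R0 0) as [Z|NZ].
    { exfalso. rewrite Z in ET. unfold Rdiv in ET. rewrite Rinv_0 in ET. lra. }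
    unfold R0_formula. fold I.
    assert (Hk : alpha / R0 = (d * lambda1 l0 * I - ln g0) / T). { apply Rmult_eq_reg_r with T. 2: lra. field_simplify; lra. }
    assert (Hk2 : d * lambda1 l0 / T * I - ln g0 / T = alpha / R0). { rewrite Hk. field. lra. }
    rewrite Hk2. field. split; auto. apply Rgt_not_eq; lra.
  - intros x Hx. simpl. ring.
  - intros x Hx. rewrite Rmin_left, Rmax_right in Hx by lra. simpl.
    rewrite Hjump by lra. rewrite Pper by lra. rewrite <- (Hpsi T x) by lra. ring.
Qed.

Definition Nf (T t : R) : R := IZR (- up (- t / T)).

Lemma Nf_int T n t : 0 < T -> INR n * T < t <= (INR n + 1) * T -> Nf T t = INR n.
Proof.
  intros HT Ht. unfold Nf.
  assert (Hu : t / T > INR n /\ t / T <= INR n + 1).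
  { split.
    - apply Rmult_lt_reg_r with T; auto. unfold Rdiv. rewrite Rmult_assoc, Rinv_l, Rmult_1_r; lra.
    - apply Rmult_le_reg_r with T; auto. unfold Rdiv. rewrite Rmult_assoc, Rinv_l, Rmult_1_r; lra. }
  rewrite <- (tech_up (- t / T) (- Z.of_nat n)).
  - rewrite Z.opp_involutive, <- INR_IZR_INZ. reflexivity.
  - rewrite opp_IZR, <- INR_IZR_INZ. unfold Rdiv in *. rewrite Ropp_mult_distr_l_reverse. lra.
  - rewrite opp_IZR, <- INR_IZR_INZ. unfold Rdiv in *. rewrite Ropp_mult_distr_l_reverse. lra.
Qed.

Lemma Nf_nT T n : 0 < T -> Nf T (INR n * T) = INR n - 1.
Proof.
  intros HT. unfold Nf.
  replace (- (INR n * T) / T) with (- INR n) by (field; lra).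
  rewrite <- (tech_up (- INR n) (1 - Z.of_nat n)).
  - rewrite opp_IZR, minus_IZR, <- INR_IZR_INZ. simpl. ring.
  - rewrite minus_IZR, <- INR_IZR_INZ. simpl. lra.
  - rewrite minus_IZR, <- INR_IZR_INZ. simpl. lra.
Qed.

Lemma if_dir d alpha T l0 rho g0 : 0 < d -> 0 < alpha -> 0 < T -> 0 < l0 ->
  admissible_rho T rho -> 0 < g0 <= 1 ->
  exists phi, pos_eigenfunction d alpha T l0 rho g0 (R0_formula d alpha T l0 rho g0) phi.
Proof.
  intros Hd Ha HT Hl Hrho Hg.
  pose proof Hrho as [Rpos [Rder [Rdc [Rper R00]]]].
  assert (RT : rho T = 1). { rewrite <- R00. rewrite <- (Rplus_0_l T) at 1. apply Rper. }
  assert (IPr := Irho_pos T rho HT Hrho).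
  assert (LP := lambda1_pos l0 Hl).
  assert (Lg : ln g0 <= 0). { rewrite <- ln_1. apply ln_le; lra. }
  set (I := RInt (fun u => 1 / (rho u ^ 2)) 0 T) in *.
  assert (dlI : 0 < d * lambda1 l0 * I) by (apply Rmult_lt_0_compat; [apply Rmult_lt_0_compat|]; lra).
  set (R0 := R0_formula d alpha T l0 rho g0).
  set (D := d * lambda1 l0 / T * I - ln g0 / T).
  assert (DP : 0 < D).
  { unfold D. replace (d * lambda1 l0 / T * I - ln g0 / T) with ((d * lambda1 l0 * I - ln g0) / T) by (field; lra).
    apply Rdiv_lt_0_compat; lra. }
  assert (Hk : alpha / R0 = D). { unfold R0, R0_formula. fold I. fold D. field. split; apply Rgt_not_eq; lra. }
  set (k := alpha / R0) in *.
  set (K := fun t => k * t - Ar d l0 rho t).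
  assert (K0 : K 0 = 0). { unfold K, Ar. rewrite RInt_point. change (@zero R_CompleteNormedModule) with 0. ring. }
  assert (KT : K T = - ln g0). { unfold K, Ar. fold I. rewrite Hk. unfold D. field. lra. }
  set (q := fun c t => exp (K t + c) / rho t).
  set (qd := fun c t => q c t * (k - d * lambda1 l0 * (1 / (rho t ^ 2)) - Derive rho t / rho t)).
  assert (dK : forall c t, is_derive (fun s => K s + c) t (k - d * lambda1 l0 * (1 / (rho t ^ 2)))).
  { intros c t.
    assert (K2 : is_derive (fun s => k * s) t k).
    { apply (is_derive_eq (fun s => k * s) _ _ (k * 1)). intros; reflexivity. apply Rmult_1_r.
      apply is_derive_scal. apply (is_derive_id (K:=R_AbsRing)). }
    generalize (is_derive_minus _ _ t _ _ K2 (dAr d l0 T rho t Hrho)). intros K3.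
    generalize (is_derive_plus _ _ t _ _ K3 (is_derive_c c t)). apply is_derive_eq.
    intros; reflexivity. unfold plus, minus, opp; simpl; unfold plus; simpl; ring. }
  assert (dq : forall c t, is_derive (q c) t (qd c t)).
  { intros c t. unfold q, qd.
    generalize (is_derive_div _ _ t _ _ (d_exp_comp _ t _ (dK c t)) (Derive_correct _ _ (Rder t)) (Rgt_not_eq _ _ (Rpos t))).
    apply is_derive_eq. intros; reflexivity. pose proof (Rpos t). unfold q. match goal with |- ?a = ?b => change (@eq R a b) end. field. apply Rgt_not_eq; lra. }
  assert (Cq : forall c t, continuity_pt (q c) t).
  { intros c t. apply cont_cpt. apply (ex_derive_continuous (q c)). eexists; apply dq. }
  assert (Cqd : forall c t, continuity_pt (qd c) t).
  { intros c t. unfold qd. apply continuity_pt_mult; auto. unfold Rdiv at 2.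
    apply continuity_pt_minus. apply continuity_pt_minus. apply continuity_pt_const; intros ? ?; auto.
    apply continuity_pt_mult. apply continuity_pt_const; intros ? ?; auto. eapply inv2_cont; eauto.
    apply continuity_pt_mult. apply cont_cpt; auto.
    apply cont_cpt. apply (ex_derive_continuous (fun s => / rho s)). auto_derive. split; auto. split; auto. apply Rgt_not_eq, Rpos. }
  assert (qpos : forall c t, 0 < q c t). { intros; unfold q. apply Rdiv_lt_0_compat. apply exp_pos. auto. }
  exists (fun t y => q ((Nf T t + 1) * ln g0) t * S l0 y).
  split; [|split; [|split]].
  - intros t y Ht Hy. apply Rmult_lt_0_compat; auto. apply S_pos; auto.
  - intros t Ht. rewrite S0, Sl0 by auto. split; ring.
  - intros y Hy. f_equal.
    assert (N0 : Nf T 0 = -1). { generalize (Nf_nT T 0 HT). simpl. rewrite Rmult_0_l. intros ->. ring. }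
    assert (NT : Nf T T = 0). { apply (Nf_int T 0 T HT). simpl. lra. }
    rewrite N0, NT. unfold q. rewrite K0, KT, RT, R00.
    replace (0 + (-1 + 1) * ln g0) with 0 by ring. replace (- ln g0 + (0 + 1) * ln g0) with 0 by ring. reflexivity.
  - intros n. set (c := (INR n + 1) * ln g0).
    exists (fun t y => q c t * S l0 y), (fun t y => qd c t * S l0 y),
      (fun t y => q c t * S' l0 y), (fun t y => q c t * (- lambda1 l0 * S l0 y)).
    assert (CS := S_cont l0).
    split; [|split; [|split; [|split; [|split]]]].
    + intros t y Ht Hy. rewrite (Nf_int T n t HT Ht). reflexivity.
    + intros y Hy. rewrite Nf_nT by auto. unfold c, q.
      replace (K (INR n * T) + (INR n + 1) * ln g0) with ((K (INR n * T) + (INR n - 1 + 1) * ln g0) + ln g0) by ring.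
      rewrite exp_plus, exp_ln by lra. field. apply Rgt_not_eq, Rpos.
    + apply cont2_cont_on2. intros x y. apply (continuity_2d_pt_mult (fun u v => q c u) (fun u v => S l0 v)).
      apply c2_fst; auto. apply c2_snd; auto.
    + apply cont2_cont_on2. intros x y. apply (continuity_2d_pt_mult (fun u v => qd c u) (fun u v => S l0 v)).
      apply c2_fst; auto. apply c2_snd; auto.
    + apply cont2_cont_on2. intros x y. apply (continuity_2d_pt_mult (fun u v => q c u) (fun u v => - lambda1 l0 * S l0 v)).
      apply c2_fst; auto. apply c2_snd; auto. apply continuity_pt_mult; auto. apply continuity_pt_const; intros ? ?; auto.
    + intros t y Ht Hy. split; [|split; [|split]].
      * apply (is_derive_eq (fun s => S l0 y * q c s) _ _ (S l0 y * qd c t)). intros; apply Rmult_comm. apply Rmult_comm.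
        apply is_derive_scal. apply dq.
      * apply is_derive_scal. apply dS.
      * apply is_derive_scal. apply dS'.
      * unfold qd. set (Q := q c t). set (L := lambda1 l0). unfold k. set (kk := alpha / R0). set (DD := Derive rho t). match goal with |- ?a = ?b => change (@eq R a b) end. field. apply Rgt_not_eq, Rpos.
Qed.

Lemma mono d alpha T l0 rho rho' g0 : 0 < d -> 0 < alpha -> 0 < T -> 0 < l0 ->
  admissible_rho T rho -> admissible_rho T rho' -> 0 < g0 <= 1 ->
  (forall t, rho t <= rho' t) ->
  R0_formula d alpha T l0 rho g0 <= R0_formula d alpha T l0 rho' g0.
Proof.
  intros Hd Ha HT Hl H1 H2 Hg Hle.
  assert (I1 := Irho_pos T rho HT H1). assert (I2 := Irho_pos T rho' HT H2).
  assert (LP := lambda1_pos l0 Hl).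
  assert (Lg : ln g0 <= 0). { rewrite <- ln_1. apply ln_le; lra. }
  assert (Ile : RInt (fun u => 1 / (rho' u ^ 2)) 0 T <= RInt (fun u => 1 / (rho u ^ 2)) 0 T).
  { apply RInt_le. lra. apply ex_RInt_cpt; intros; eapply inv2_cont; eauto.
    apply ex_RInt_cpt; intros; eapply inv2_cont; eauto.
    intros x _. pose proof H1 as [P1 _]. pose proof (P1 x). unfold Rdiv. rewrite !Rmult_1_l.
    apply Rinv_le_contravar. apply pow_lt; auto. apply pow_incr. split; [lra|auto]. }
  unfold R0_formula.
  set (J1 := RInt (fun u => 1 / (rho u ^ 2)) 0 T) in *.
  set (J2 := RInt (fun u => 1 / (rho' u ^ 2)) 0 T) in *.
  assert (0 < d * lambda1 l0 / T * J2 - ln g0 / T).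
  { replace (d * lambda1 l0 / T * J2 - ln g0 / T) with ((d * lambda1 l0 * J2 - ln g0) / T) by (field; lra).
    apply Rdiv_lt_0_compat; auto. assert (0 < d * lambda1 l0 * J2) by (apply Rmult_lt_0_compat; [apply Rmult_lt_0_compat|]; lra). lra. }
  assert (d * lambda1 l0 / T * J2 - ln g0 / T <= d * lambda1 l0 / T * J1 - ln g0 / T).
  { apply Rplus_le_compat_r. apply Rmult_le_compat_l; auto. apply Rlt_le, Rdiv_lt_0_compat; auto. apply Rmult_lt_0_compat; auto. }
  unfold Rdiv at 1 3. apply Rmult_le_compat_l. lra. apply Rinv_le_contravar; auto.
Qed.

Theorem theorem2p1 (d alpha T l0 : R) (rho g dg : R -> R) :
  0 < d -> 0 < alpha -> 0 < T -> 0 < l0 ->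
  admissible_rho T rho -> assumption_A1 g dg ->
  (forall R0 : R,
     (exists phi : R -> R -> R, pos_eigenfunction d alpha T l0 rho (dg 0) R0 phi)
     <-> R0 = R0_formula d alpha T l0 rho (dg 0)) /\
  (forall rho' : R -> R, admissible_rho T rho' ->
     (forall t, rho t <= rho' t) ->
     R0_formula d alpha T l0 rho (dg 0) <= R0_formula d alpha T l0 rho' (dg 0)).
Proof.
  intros Hd Ha HT Hl Hrho HA. pose proof (g0_le1 g dg HA) as Hg.
  split.
  - intros R0. split.
    + intros [phi Hphi]. eapply only_if; eauto.
    + intros ->. apply if_dir; auto.
  - intros rho' Hrho' Hle. apply mono; auto.
Qed.
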